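(* Let $I=(i_1,\dots,i_k)$ be positive integers with sum $n$, and let $U,V\in S_n^I$ with $U\preceq V$ and $U\ne V$. Let $j_0$ be the least index with $U(j_0)\neq V(j_0)$. Then $U(j_0)<V(j_0)$. Let $l\ge j_0$ be maximal such that $V(j_0)=V(j_0+1)=\dots=V(l)$, and let $m$ be the least integer with $l\le m\le n$ satisfying $U(j_0)\le V(m)<V(l)$. Let $V'=V\circ(l,m)$, i.e. the string $(V(1),\dots,V(n))$ with the entries in positions $l$ and $m$ swapped. Then $U\preceq V'\preceq V$.
   Context: $S_n^I$ is the set of surjective maps $\tau\colon\{1,\dots,n\}\to\{1,\dots,k\}$ with $|\tau^{-1}(j)|=i_j$ for all $j$, written as strings $(\tau(1),\dots,\tau(n))$. Put $r_\tau[p,q]=\#\{j\le p:\ \tau(j)\ge q\}$; the Bruhat order on $S_n^I$ is $\tau\preceq\upsilon$ iff $r_\tau[p,q]\le r_\upsilon[p,q]$ for all $1\le p\le n$, $1\le q\le k$. *)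

(* Defs.v *)
(* Elements of S_n^I are represented as strings (seq nat)
   (tau(1), ..., tau(n)); positions and values are 1-based as in the paper. *)
From mathcomp Require Import all_boot.
Set Implicit Arguments. Unset Strict Implicit. Unset Printing Implicit Defensive.

(* composition I = (i_1, ..., i_k) is a seq nat; k = size I, n = sumn I *)

Definition at_ (tau : seq nat) (p : nat) : nat := nth 0 tau p.-1.

(* tau \in S_n^I : tau : {1..n} -> {1..k} with |tau^{-1}(q)| = i_q for all q
   (surjectivity follows since all i_q are positive). *)
Definition in_SnI (I : seq nat) (tau : seq nat) : Prop :=
  [/\ size tau = sumn I,
      all (fun x => 0 < x <= size I) tau &
      forall q, 1 <= q <= size I -> count_mem q tau = nth 0 I q.-1].

Definition rk (tau : seq nat) (p q : nat) : nat :=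
  count (fun x => q <= x) (take p tau).

Definition bruhat_le (I : seq nat) (tau ups : seq nat) : Prop :=
  forall p q, 1 <= p <= sumn I -> 1 <= q <= size I -> rk tau p q <= rk ups p q.

Definition swap_pos (V : seq nat) (l m : nat) : seq nat :=
  [seq at_ V (if j == l then m else if j == m then l else j) | j <- iota 1 (size V)].

(* Main.v *)
Require Import Defs.
From mathcomp Require Import all_boot.
From mathcomp Require Import zify.

Definition Sr (tau : seq nat) (q a b : nat) : nat :=
  \sum_(a <= j < b) (q <= at_ tau j).

Lemma Sr_split tau q a b c : a <= b -> b <= c -> Sr tau q a c = Sr tau q a b + Sr tau q b c.
Proof. move=> H1 H2; rewrite /Sr -big_cat_nat //. Qed.
Arguments Sr_split tau q {a b c}.

Lemma Sr1 tau q a : Sr tau q a a.+1 = (q <= at_ tau a).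
Proof. by rewrite /Sr big_nat1. Qed.

Lemma Sr_ext tau tau' q q' a b :
  (forall j, a <= j < b -> (q <= at_ tau j) = (q' <= at_ tau' j)) ->
  Sr tau q a b = Sr tau' q' a b.
Proof. move=> H; apply: eq_big_nat => j Hj; by rewrite H. Qed.
Arguments Sr_ext {tau tau' q q' a b}.

Lemma Sr_mono tau tau' q q' a b :
  (forall j, a <= j < b -> (q <= at_ tau j) <= (q' <= at_ tau' j)) ->
  Sr tau q a b <= Sr tau' q' a b.
Proof.
move=> H; rewrite /Sr big_nat_cond [X in _ <= X]big_nat_cond.
apply: leq_sum => j /andP[Hj _]; exact: H.
Qed.

Lemma rkS tau p q : p <= size tau -> rk tau p q = Sr tau q 1 p.+1.
Proof.
elim: p => [|p IH] Hp.
  by rewrite /rk take0 /Sr big_geq.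
rewrite /rk (take_nth 0) // -cats1 count_cat /=.
rewrite -/(rk tau p q) IH; last by apply: ltnW.
rewrite (Sr_split _ _ (b := p.+1) (c := p.+2)) // Sr1 /at_ /= addn0 //.
Qed.

Lemma at_swap V l m j : 1 <= j <= size V ->
  at_ (swap_pos V l m) j = at_ V (if j == l then m else if j == m then l else j).
Proof.
move=> Hj; rewrite /swap_pos {1}/at_ (nth_map 0) ?size_iota; last lia.
rewrite nth_iota; last lia.
by have -> : 1 + j.-1 = j by lia.
Qed.

Ltac sp t q a b c := rewrite (@Sr_split t q a b c ltac:(lia) ltac:(lia)).

Theorem lemma2p11 (I U V : seq nat) :
  all (fun i => 0 < i) I ->
  in_SnI I U -> in_SnI I V ->
  bruhat_le I U V -> U <> V ->
  forall j0 : nat,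
    1 <= j0 <= sumn I -> at_ U j0 != at_ V j0 ->
    (forall j, 1 <= j < j0 -> at_ U j = at_ V j) ->
    at_ U j0 < at_ V j0 /\
    (forall l : nat,
       j0 <= l <= sumn I ->
       (forall j, j0 <= j <= l -> at_ V j = at_ V j0) ->
       (l = sumn I \/ at_ V l.+1 != at_ V j0) ->
       forall m : nat,
         l <= m <= sumn I ->
         at_ U j0 <= at_ V m < at_ V l ->
         (forall m', l <= m' < m -> ~~ (at_ U j0 <= at_ V m' < at_ V l)) ->
         bruhat_le I U (swap_pos V l m) /\ bruhat_le I (swap_pos V l m) V).
Proof.
move=> HI [sU aU cU] [sV aV cV] Hle HUV j0 Hj0 Hne Hpre.
set n := sumn I in sU sV Hj0 Hle *.
have atU : forall j, 1 <= j <= n -> 0 < at_ U j <= size I.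
  move=> j Hj; move/allP: aU; apply; rewrite /at_ mem_nth // sU; case: j Hj => //= j; lia.
set q1 := at_ U j0.
have preS : forall q, Sr U q 1 j0 = Sr V q 1 j0.
  move=> q; apply: Sr_ext => j Hj; by rewrite Hpre.
have first : q1 < at_ V j0.
  have := Hle j0 q1 Hj0 (atU _ Hj0).
  rewrite !rkS ?sU ?sV; try lia.
  sp U q1 1 j0 j0.+1; sp V q1 1 j0 j0.+1.
  rewrite !Sr1 preS leq_add2l leqnn => H.
  by rewrite ltn_neqAle Hne; case: (q1 <= at_ V j0) H.
split => // l Hl Hblock Hmax m Hm Hmr Hmin.
have lm : l < m.
  case: (ltngtP l m) => //; [lia | move=> E; move: Hmr; rewrite E; lia].
set V' := swap_pos V l m.
have sV' : size V' = n by rewrite /V' /swap_pos size_map size_iota.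
have atV' : forall j, 1 <= j <= n -> j != l -> j != m -> at_ V' j = at_ V j.
  move=> j Hj H1 H2; rewrite /V' at_swap ?sV //.
  by rewrite (negbTE H1) (negbTE H2).
have atV'l : at_ V' l = at_ V m.
  by rewrite /V' at_swap ?eqxx ?sV //; lia.
have atV'm : at_ V' m = at_ V l.
  rewrite /V' at_swap ?eqxx ?sV; last lia.
  by case: eqP => // E; lia.
have rU : forall p q, p <= n -> rk U p q = Sr U q 1 p.+1.
  by move=> p q Hp; rewrite rkS // sU.
have rV : forall p q, p <= n -> rk V p q = Sr V q 1 p.+1.
  by move=> p q Hp; rewrite rkS // sV.
have rV' : forall p q, p <= n -> rk V' p q = Sr V' q 1 p.+1.
  by move=> p q Hp; rewrite rkS // sV'.
have e1 : forall q a b, 1 <= a -> b <= n.+1 -> (b <= l \/ (l < a /\ b <= m) \/ m < a) ->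
    Sr V' q a b = Sr V q a b.
  move=> q a b Ha Hb Hab; apply: Sr_ext => j Hj; rewrite atV' //; apply/eqP; lia.
have key : forall p q, 1 <= p <= n ->
   [/\ p < l -> rk V' p q = rk V p q,
       l <= p < m -> rk V' p q + (q <= at_ V l) = rk V p q + (q <= at_ V m)
     & m <= p -> rk V' p q = rk V p q].
  move=> p q Hp; have Hpn : p <= n by case/andP: Hp.
  rewrite rV' // rV //.
  split => Hpl.
  - apply: e1; lia.
  - sp V' q 1 l p.+1; sp V' q l l.+1 p.+1; sp V q 1 l p.+1; sp V q l l.+1 p.+1.
    rewrite !Sr1 atV'l e1 ?[Sr V' q l.+1 _]e1; lia.
  - sp V' q 1 l p.+1; sp V' q l l.+1 p.+1; sp V q 1 l p.+1; sp V q l l.+1 p.+1.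
    sp V' q l.+1 m p.+1; sp V' q m m.+1 p.+1; sp V q l.+1 m p.+1; sp V q m m.+1 p.+1.
    rewrite !Sr1 atV'l atV'm e1 ?[Sr V' q l.+1 _]e1 ?[Sr V' q m.+1 _]e1; lia.
have mono : forall q, (q <= at_ V m) <= (q <= at_ V l).
  move=> q; case: (leqP q (at_ V m)) => // H.
  by rewrite (leq_trans H) // ltnW //; case/andP: Hmr.
have VlV0 : at_ V l = at_ V j0 by apply: Hblock; lia.
split => p q Hp Hq; have [k1 k2 k3] := key p q Hp.
- case: (ltnP p l) => H1; first by rewrite k1 //; apply: Hle.
  case: (ltnP p m) => H2; last by rewrite k3 //; apply: Hle.
  have {}k2 := k2 ltac:(by rewrite H1 H2).
  have HUV1 := Hle p q Hp Hq.
  case E1: (q <= at_ V m).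
    have E2 : (q <= at_ V l) by have := mono q; rewrite E1 lt0b.
    move: k2; rewrite E1 E2; lia.
  case E2: (q <= at_ V l); last by move: k2; rewrite E1 E2; lia.
  have qq1 : q1 < q.
    move/negbT: E1; rewrite -ltnNge => E1; apply: leq_ltn_trans E1.
    by case/andP: Hmr.
  have Hpn : p <= n by case/andP: Hp.
  have HB := Hle p q1 Hp (atU _ Hj0).
  move: HUV1 HB k2; rewrite !rU // !rV // !rV' //.
  sp U q 1 j0 p.+1; sp U q j0 j0.+1 p.+1; sp V q 1 j0 p.+1; sp V q j0 j0.+1 p.+1.
  sp U q1 1 j0 p.+1; sp U q1 j0 j0.+1 p.+1; sp V q1 1 j0 p.+1; sp V q1 j0 j0.+1 p.+1.
  rewrite !Sr1 !preS.
  have -> : (q <= at_ U j0) = false by apply/negbTE; rewrite -ltnNge.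
  have -> : (q1 <= at_ U j0) = true by rewrite leqnn.
  have -> : (q1 <= at_ V j0) = true by rewrite ltnW.
  have -> : (q <= at_ V j0) = true by rewrite -VlV0.
  have M1 : Sr U q j0.+1 p.+1 <= Sr U q1 j0.+1 p.+1.
    apply: Sr_mono => j Hj; case: (leqP q (at_ U j)) => // H; by rewrite (leq_trans (ltnW qq1) H).
  have M2 : Sr V q j0.+1 p.+1 = Sr V q1 j0.+1 p.+1.
    apply: Sr_ext => j Hj.
    case: (leqP j l) => Hjl.
      rewrite Hblock; last lia.
      by rewrite -VlV0 E2 (leq_trans (ltnW qq1)) // -VlV0.
    have := Hmin j; rewrite -/q1 => /(_ ltac:(lia)).
    case: (leqP q1 (at_ V j)) => /= Hq1 Hj2.
      by rewrite -leqNgt in Hj2; rewrite (leq_trans E2 Hj2).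
    have -> : (q <= at_ V j) = false by apply/negbTE; rewrite -ltnNge (ltn_trans Hq1 qq1).
    by [].
  lia.
- case: (ltnP p l) => H1; first by rewrite k1.
  case: (ltnP p m) => H2; last by rewrite k3.
  have {}k2 := k2 ltac:(by rewrite H1 H2).
  have := mono q; lia.
Qed.
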